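(* Let $[a(n)]\in\mathbb{L}$. Then: (1) $[a(n)]\in\mathbb{B}$; (2) for every integer $m\ge2$, $[a(mn)]=[a(n)]$; (3) $\pi_{\mathbb{E}}([a(n)])=0$, i.e. $\limsup_{n\to\infty}\frac{\log a(n)}{n}=0$.
   Context: Let $\mathcal{O}$ be the set of non-decreasing sequences $a:\mathbb{N}\to[0,\infty)$, $a\approx b$ iff $c_1a(n)\le b(n)\le c_2a(n)$ for all $n$ for some constants $0<c_1\le c_2$, $\mathbb{O}=\mathcal{O}/\!\approx$ with classes $[a(n)]$. A class $[a(n)]$ has the linearly invariant property (LIP) if $[a(mn)]=[a(n)]$ for some integer $m\ge2$; $\mathbb{L}$ is the set of such classes. It has the bounded jump property if there is $C>0$ with $a(n+1)\le Ca(n)$ for all $n$; $\mathbb{B}$ is the set of such classes. For $[a(n)]\in\mathbb{O}$, $\pi_{\mathbb{E}}([a(n)])=\inf\{t>0:[a(n)]\le[e^{tn}]\}$ (with value $\infty$ if the set is empty), which equals $\limsup_{n\to\infty}\frac{\log a(n)}{n}$. *)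

(* Defs.v *)
From HB Require Import structures.
From mathcomp Require Import all_boot all_order all_algebra.
From mathcomp Require Import all_classical all_reals all_analysis.
Set Implicit Arguments. Unset Strict Implicit. Unset Printing Implicit Defensive.
Import Order.TTheory GRing.Theory Num.Theory.
Local Open Scope ring_scope.
Local Open Scope classical_set_scope.

(* Sequences are indexed by the positive integers N = {1,2,...}; values at
   index 0 are ignored everywhere. *)

Definition in_O (R : realType) (a : nat -> R) : Prop :=
  (forall n, (0 < n)%N -> 0 <= a n) /\
  (forall n k, (0 < n)%N -> (n <= k)%N -> a n <= a k).

Definition seq_equiv (R : realType) (a b : nat -> R) : Prop :=
  exists c1 c2 : R, 0 < c1 /\ c1 <= c2 /\
    forall n, (0 < n)%N -> c1 * a n <= b n /\ b n <= c2 * a n.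

Definition seq_le (R : realType) (a b : nat -> R) : Prop :=
  exists C : R, 0 < C /\ forall n, (0 < n)%N -> a n <= C * b n.

Definition LIP (R : realType) (a : nat -> R) : Prop :=
  exists m : nat, (2 <= m)%N /\ seq_equiv (fun n => a (m * n)%N) a.

Definition bounded_jump (R : realType) (a : nat -> R) : Prop :=
  exists C : R, 0 < C /\ forall n, (0 < n)%N -> a n.+1 <= C * a n.

(* pi_E([a]) = inf {t > 0 : [a] <= [e^{tn}]}, +oo if the set is empty *)
Definition pi_E (R : realType) (a : nat -> R) : \bar R :=
  ereal_inf [set (t%:E)%E | t in [set t : R | 0 < t /\
                          seq_le a (fun n => expR (t * n%:R))]].

(* Main.v *)
Require Import Defs.
From mathcomp Require Import all_boot all_order all_algebra.
From mathcomp Require Import all_classical all_reals all_analysis.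
From mathcomp Require Import zify ring lra.
Import Order.TTheory GRing.Theory Num.Theory.
Local Open Scope ring_scope.

Section Aux.
Variables (R : realType) (a : nat -> R) (m : nat) (D : R).
Hypothesis a0 : forall n, (0 < n)%N -> 0 <= a n.
Hypothesis amono : forall n k, (0 < n)%N -> (n <= k)%N -> a n <= a k.
Hypothesis m2 : (2 <= m)%N.
Hypothesis D1 : 1 <= D.
Hypothesis step : forall n, (0 < n)%N -> a (m * n)%N <= D * a n.

Lemma iter_step k n : (0 < n)%N -> a (m ^ k * n)%N <= D ^+ k * a n.
Proof.
move=> n0; elim: k => [|k IH]; first by rewrite expn0 mul1n expr0 mul1r.
rewrite expnS -mulnA exprS -mulrA.
have h : (0 < m ^ k * n)%N by rewrite muln_gt0 expn_gt0 n0 (leq_trans _ m2).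
apply: (le_trans (step _ h)).
apply: ler_wpM2l => //; exact: le_trans ler01 D1.
Qed.

Lemma jump n : (0 < n)%N -> a n.+1 <= D * a n.
Proof.
move=> n0; apply: (le_trans _ (step _ n0)); apply: amono => //.
have : (2 * n <= m * n)%N by rewrite leq_mul2r m2 orbT.
move: n0; lia.
Qed.

Lemma growth t : 0 < t -> exists C, 0 < C /\
  forall n, (0 < n)%N -> a n <= C * expR (t * n%:R).
Proof.
move=> t0.
set N0 := (Num.trunc (D ^+ 2 / t)).+1.
set K := (m * N0)%N.
set B := \sum_(i < K) `|a i|.
have aK : forall i, (0 < i)%N -> (i < K)%N -> a i <= B.
  move=> i i0 iK; rewrite /B (bigD1 (Ordinal iK)) //=.
  apply: le_trans (ler_norm _) _; rewrite lerDl.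
  by apply: sumr_ge0 => j _.
have B0 : 0 <= B by apply: sumr_ge0 => j _.
have D0 : 0 <= D by apply: le_trans ler01 D1.
have m0 : (0 < m)%N by apply: leq_trans m2.
have e1 : forall x : R, 0 <= x -> 1 <= expR x.
  move=> x x0; apply: le_trans (expR_ge1Dx x); lra.
have N0D : D ^+ 2 < t * N0%:R.
  have := truncnS_gt (D ^+ 2 / t); rewrite -/N0 => h.
  by move: h; rewrite -(ltr_pM2l t0) mulrCA mulfV ?mulr1 // lt0r_neq0.
exists (B + 1); split; first lra.
move=> n; elim/ltn_ind: n => n IH n0.
case: (ltnP n K) => nK.
  have h1 := aK n n0 nK.
  have h2 : 1 <= expR (t * n%:R) by apply: e1; apply: mulr_ge0; [lra|].
  have h3 := a0 n n0.
  rewrite -[a n]mulr1; apply: ler_pM; lra.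
set q := (n %/ m)%N.
have Nq : (N0 <= q)%N by rewrite -(mulKn N0 m0) leq_div2r.
have q0 : (0 < q)%N by apply: leq_trans Nq.
have qn : (q < n)%N by apply: ltn_Pdiv.
have hq := IH q qn q0.
have nmq : (n <= m * q.+1)%N by rewrite mulnC ltnW // ltn_ceil.
have mqn : (2 * q <= n)%N.
  apply: leq_trans (leq_divM n m); rewrite mulnC leq_mul2l m2 orbT //.
have h1 : a n <= D * (D * a q).
  have mq0 : (0 < m * q.+1)%N by rewrite muln_gt0 m0.
  apply: (le_trans (amono _ _ n0 nmq)).
  apply: (le_trans (step _ (ltn0Sn q))); apply: ler_wpM2l => //; exact: jump.
have tq : t * N0%:R <= t * q%:R by rewrite ler_pM2l // ler_nat.
have eq1 : t * q%:R <= expR (t * q%:R).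
  apply: le_trans (expR_ge1Dx _); lra.
have E : expR (t * q%:R) * expR (t * q%:R) <= expR (t * n%:R).
  rewrite -expRD ler_expR -mulrDr ler_pM2l // -natrD ler_nat; lia.
have aq0 : 0 <= a q by apply: a0.
have eq0 : 0 <= expR (t * q%:R) by apply: expR_ge0.
apply: le_trans h1 _.
rewrite mulrA -expr2.
apply: le_trans (_ : D ^+ 2 * ((B + 1) * expR (t * q%:R)) <= _).
  by apply: ler_wpM2l; [apply: exprn_ge0|].
apply: le_trans (_ : expR (t * q%:R) * ((B + 1) * expR (t * q%:R)) <= _).
  apply: ler_wpM2r; [apply: mulr_ge0; lra|lra].
rewrite mulrCA; apply: ler_wpM2l; lra.
Qed.
End Aux.
Theorem proposition2p7 (R : realType) (a : nat -> R) :
  in_O a -> LIP a ->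
  bounded_jump a /\
  (forall m : nat, (2 <= m)%N -> seq_equiv (fun n => a (m * n)%N) a) /\
  pi_E a = 0%E.
Proof.
move=> [a0 amono] [m [m2 [c1 [c2 [c10 [c12 H]]]]]].
set D := Num.max 1 c1^-1.
have D1 : 1 <= D by rewrite le_max lexx.
have step : forall n, (0 < n)%N -> a (m * n)%N <= D * a n.
  move=> n n0; have [h _] := H n n0; move: h => /= h.
  rewrite -[a (m * n)%N](mulKf (lt0r_neq0 c10)).
  apply: (@le_trans _ _ (c1^-1 * a n)).
    by apply: ler_wpM2l => //; rewrite invr_ge0 ltW.
  by apply: ler_wpM2r; [exact: a0|rewrite le_max lexx orbT].
split; [|split].
- exists D; split; first exact: lt_le_trans ltr01 D1.
  move=> n n0; exact: (@jump R a m D amono m2 D1 step n n0).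
- move=> m' m'2.
  have Dm : 1 <= D ^+ m' by exact: exprn_ege1.
  have Dm0 : 0 < D ^+ m' by exact: lt_le_trans ltr01 Dm.
  exists (D ^+ m')^-1, 1; split; first by rewrite invr_gt0.
  split; first by rewrite invf_le1.
  move=> n n0 /=; rewrite mul1r; split; last first.
    by apply: amono => //; rewrite leq_pmull // (leq_trans _ m'2).
  rewrite ler_pdivrMl // .
  apply: (le_trans _ (@iter_step R a m D m2 D1 step m' n n0)).
  apply: amono; first by rewrite muln_gt0 n0 (leq_trans _ m'2).
  by rewrite leq_mul2r ltnW ?orbT // ltn_expl.
- rewrite /pi_E.
  set S := (X in ereal_inf X).
  have inS : forall e : R, 0 < e -> S (e%:E)%E.
    move=> e e0; exists e => //; split => //.
    exact: (@growth R a m D a0 amono m2 D1 step e e0).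
  have hI : forall e : R, 0 < e -> (ereal_inf S <= e%:E)%E.
    by move=> e e0; apply: ereal_inf_lbound; apply: inS.
  apply/eqP; rewrite eq_le; apply/andP; split.
    move: hI; case: (ereal_inf S) => [r| |] hI //.
      rewrite lee_fin; apply/unstable.ler_gtP => e e0; by rewrite -lee_fin hI.
    by have := hI 1 ltr01.
  apply: le_ereal_inf_tmp => x [t [t0 _] <-].
  by rewrite lee_fin ltW.
Qed.
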